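(* Let $\mathbb{X},\mathbb{Y}$ be real normed linear spaces and $T\in\mathbb{B}(\mathbb{X},\mathbb{Y})$ with $T\neq0$ and $M_T\neq\emptyset$. Then $T$ is a smooth point of $\mathbb{B}(\mathbb{X},\mathbb{Y})$ if and only if all of the following hold: (i) $M_T=\{\pm x_0\}$ for some $x_0\in S_{\mathbb{X}}$; (ii) $Tx_0$ is a smooth point of $\mathbb{Y}$; (iii) for every $A\in\mathbb{B}(\mathbb{X},\mathbb{Y})$, $T\perp_B A$ if and only if $Tx_0\perp_B Ax_0$.
   Context: All spaces are real; $\mathbb{B}(\mathbb{X},\mathbb{Y})$ has the operator norm; $S_{\mathbb{X}}$ is the unit sphere; $M_T=\{x\in S_{\mathbb{X}}:\|Tx\|=\|T\|\}$. A nonzero element $x$ of a normed space $\mathbb{Z}$ is smooth if there is a unique $f\in\mathbb{Z}^*$ with $\|f\|=1$ and $f(x)=\|x\|$. $x\perp_B y$ means $\|x+\lambda y\|\ge\|x\|$ for all $\lambda\in\mathbb{R}$. *)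

(* Defs.v *)
From Stdlib Require Import Reals Lra ClassicalEpsilon.
Open Scope R_scope.

(* Supremum of a set of reals (the lub when it exists; 0 otherwise, a
   junk value never used for bounded nonempty sets). *)
Definition Rsup (E : R -> Prop) : R :=
  match excluded_middle_informative (bound E /\ exists x, E x) with
  | left H => proj1_sig (completeness E (proj1 H) (proj2 H))
  | right _ => 0
  end.

Record NStruct := {
  car :> Type;
  nzero : car;
  nadd : car -> car -> car;
  nscal : R -> car -> car;
  nnorm : car -> R }.

Arguments nzero {_}.
Arguments nadd {_}.
Arguments nscal {_}.
Arguments nnorm {_}.

Record NormedSpace := {
  ns :> NStruct;
  add_assoc : forall x y z : ns, nadd x (nadd y z) = nadd (nadd x y) z;
  add_comm : forall x y : ns, nadd x y = nadd y x;
  add_zero : forall x : ns, nadd nzero x = x;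
  add_opp : forall x : ns, nadd x (nscal (-1) x) = nzero;
  scal_one : forall x : ns, nscal 1 x = x;
  scal_assoc : forall a b (x : ns), nscal a (nscal b x) = nscal (a * b) x;
  scal_distr_l : forall a (x y : ns), nscal a (nadd x y) = nadd (nscal a x) (nscal a y);
  scal_distr_r : forall a b (x : ns), nscal (a + b) x = nadd (nscal a x) (nscal b x);
  norm_eq0 : forall x : ns, nnorm x = 0 -> x = nzero;
  norm_scal : forall a (x : ns), nnorm (nscal a x) = Rabs a * nnorm x;
  norm_triangle : forall x y : ns, nnorm (nadd x y) <= nnorm x + nnorm y }.

Record BL (X Y : NormedSpace) := {
  app :> X -> Y;
  app_add : forall x y, app (nadd x y) = nadd (app x) (app y);
  app_scal : forall a x, app (nscal a x) = nscal a (app x);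
  app_bounded : exists C, forall x, nnorm (app x) <= C * nnorm x }.

Arguments app {X Y}.

Section Ops.
Variables X Y : NormedSpace.

Lemma norm_zero_Y : nnorm (@nzero Y) = 0.
Proof.
  assert (H : @nzero Y = nscal 0 nzero).
  { pose proof (scal_distr_r Y 0 0 nzero) as E. rewrite Rplus_0_r in E.
    pose proof (add_opp Y (nscal 0 nzero)) as E2. rewrite <- E2.
    rewrite E at 1. rewrite <- add_assoc, add_opp, add_comm, add_zero. reflexivity. }
  rewrite H, norm_scal, Rabs_R0. ring.
Qed.

Lemma norm_nonneg_Y : forall y : Y, 0 <= nnorm y.
Proof.
  intro y. pose proof (norm_triangle Y y (nscal (-1) y)) as T.
  rewrite add_opp, norm_zero_Y, norm_scal in T.
  replace (Rabs (-1)) with 1 in T by (rewrite Rabs_left; lra). lra.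
Qed.

Lemma swap4 : forall a b c d : Y,
  nadd (nadd a b) (nadd c d) = nadd (nadd a c) (nadd b d).
Proof.
  intros. rewrite <- !add_assoc. f_equal. rewrite !add_assoc. f_equal.
  apply add_comm.
Qed.

Definition opzero : BL X Y.
Proof.
  refine {| app := fun _ => nzero |}.
  - intros. symmetry. apply add_zero.
  - intros. assert (H : @nzero Y = nscal 0 nzero).
    { pose proof (scal_distr_r Y 0 0 nzero) as E. rewrite Rplus_0_r in E.
      pose proof (add_opp Y (nscal 0 nzero)) as E2. rewrite <- E2.
      rewrite E at 1. rewrite <- add_assoc, add_opp, add_comm, add_zero. reflexivity. }
    rewrite H at 2. rewrite scal_assoc, Rmult_0_r. exact H.
  - exists 0. intros. rewrite norm_zero_Y. lra.
Defined.

Definition opadd (T S : BL X Y) : BL X Y.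
Proof.
  refine {| app := fun x => nadd (T x) (S x) |}.
  - intros. rewrite (app_add _ _ T), (app_add _ _ S). apply swap4.
  - intros. rewrite (app_scal _ _ T), (app_scal _ _ S), scal_distr_l. reflexivity.
  - destruct (app_bounded _ _ T) as [C1 H1]. destruct (app_bounded _ _ S) as [C2 H2].
    exists (C1 + C2). intros. eapply Rle_trans. apply norm_triangle.
    specialize (H1 x). specialize (H2 x). lra.
Defined.

Definition opscal (c : R) (T : BL X Y) : BL X Y.
Proof.
  refine {| app := fun x => nscal c (T x) |}.
  - intros. rewrite (app_add _ _ T), scal_distr_l. reflexivity.
  - intros. rewrite (app_scal _ _ T), !scal_assoc, Rmult_comm. reflexivity.
  - destruct (app_bounded _ _ T) as [C H]. exists (Rabs c * C). intros.
    rewrite norm_scal, Rmult_assoc. apply Rmult_le_compat_l. apply Rabs_pos. apply H.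
Defined.

Definition opnorm (T : BL X Y) : R :=
  Rsup (fun r => exists x : X, nnorm x <= 1 /\ r = nnorm (T x)).

End Ops.

Arguments opnorm {X Y}.

Definition Bspace (X Y : NormedSpace) : NStruct :=
  {| car := BL X Y; nzero := opzero X Y; nadd := opadd X Y;
     nscal := opscal X Y; nnorm := opnorm |}.

Definition is_functional (Z : NStruct) (f : Z -> R) : Prop :=
  (forall u v, f (nadd u v) = f u + f v) /\
  (forall a u, f (nscal a u) = a * f u) /\
  (exists C, forall u, Rabs (f u) <= C * nnorm u).

Definition dualnorm (Z : NStruct) (f : Z -> R) : R :=
  Rsup (fun r => exists z : Z, nnorm z <= 1 /\ r = Rabs (f z)).

Definition smooth (Z : NStruct) (x : Z) : Prop :=
  x <> nzero /\
  exists! f : Z -> R, is_functional Z f /\ dualnorm Z f = 1 /\ f x = nnorm x.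

Definition BJ (Z : NStruct) (x y : Z) : Prop :=
  forall l : R, nnorm (nadd x (nscal l y)) >= nnorm x.

Definition in_sphere (X : NormedSpace) (x : X) : Prop := nnorm x = 1.

Definition M_T {X Y : NormedSpace} (T : BL X Y) (x : X) : Prop :=
  in_sphere X x /\ nnorm (T x) = opnorm T.

(* Main.v *)
Require Import Defs.
From Stdlib Require Import Reals Lra ClassicalEpsilon Classical FunctionalExtensionality ProofIrrelevance.
From mathcomp Require classical_sets boolp.
Open Scope R_scope.

Lemma zornP (T : Type) (t0 : T) (Rl : T -> T -> Prop) :
  (forall t, Rl t t) -> (forall r s t, Rl r s -> Rl s t -> Rl r t) ->
  (forall A : T -> Prop, (forall s t, A s -> A t -> Rl s t \/ Rl t s) ->
     exists t, forall s, A s -> Rl s t) ->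
  exists t, forall s, Rl t s -> Rl s t.
Proof.
  intros Hr Ht Hc.
  destruct (@classical_sets.ZL_preorder T t0 (fun a b => boolp.asbool (Rl a b))) as [t Hm].
  - intro t. apply boolp.asboolT. apply Hr.
  - intros r s t H1 H2. apply boolp.asboolT. apply boolp.asboolW in H1. apply boolp.asboolW in H2. eauto.
  - intros A HA. destruct (Hc A) as [t Hu].
    + intros s t Hs Htt. destruct (HA s t Hs Htt) as [H|H]; apply boolp.asboolW in H; auto.
    + exists t. intros s Hs. apply boolp.asboolT. auto.
  - exists t. intros s H. apply boolp.asboolW. apply Hm. apply boolp.asboolT. exact H.
Qed.

Section HBgen.
Variable V : Type.
Variable vz : V.
Variable vadd : V -> V -> V.
Variable vsc : R -> V -> V.
Variable p : V -> R.
Hypothesis Hassoc : forall x y z, vadd x (vadd y z) = vadd (vadd x y) z.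
Hypothesis Hcomm : forall x y, vadd x y = vadd y x.
Hypothesis Hzero : forall x, vadd vz x = x.
Hypothesis Hopp : forall x, vadd x (vsc (-1) x) = vz.
Hypothesis Hone : forall x, vsc 1 x = x.
Hypothesis Hsassoc : forall a b x, vsc a (vsc b x) = vsc (a * b) x.
Hypothesis Hdl : forall a x y, vsc a (vadd x y) = vadd (vsc a x) (vsc a y).
Hypothesis Hdr : forall a b x, vsc (a + b) x = vadd (vsc a x) (vsc b x).
Hypothesis Hpsub : forall x y, p (vadd x y) <= p x + p y.
Hypothesis Hphom : forall a x, p (vsc a x) = Rabs a * p x.

Lemma add0r x : vadd x vz = x.
Proof. rewrite Hcomm. apply Hzero. Qed.

Lemma vcancel x y z : vadd x z = vadd y z -> x = y.
Proof.
  intro E. assert (E2 : vadd (vadd x z) (vsc (-1) z) = vadd (vadd y z) (vsc (-1) z)) by (rewrite E; reflexivity).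
  rewrite <- !Hassoc, Hopp, !add0r in E2. exact E2.
Qed.

Lemma sc0 x : vsc 0 x = vz.
Proof.
  pose proof (Hdr 0 0 x) as E. rewrite Rplus_0_r in E.
  symmetry. apply (vcancel _ _ (vsc 0 x)). rewrite Hzero. exact E.
Qed.

Lemma scz a : vsc a vz = vz.
Proof. rewrite <- (sc0 vz), Hsassoc, Rmult_0_r. reflexivity. Qed.

Lemma p0 : p vz = 0.
Proof. rewrite <- (sc0 vz), Hphom, Rabs_R0. ring. Qed.

Lemma pnn x : 0 <= p x.
Proof.
  pose proof (Hpsub x (vsc (-1) x)) as H. rewrite Hopp, p0, Hphom in H.
  replace (Rabs (-1)) with 1 in H by (rewrite Rabs_left; lra). lra.
Qed.

Lemma vswap4 a b c d : vadd (vadd a b) (vadd c d) = vadd (vadd a c) (vadd b d).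
Proof.
  rewrite <- !Hassoc. f_equal. rewrite !Hassoc. f_equal. apply Hcomm.
Qed.

Definition subsp (D : V -> Prop) := D vz /\ (forall x y, D x -> D y -> D (vadd x y)) /\
  (forall a x, D x -> D (vsc a x)).
Definition linon (D : V -> Prop) (f : V -> R) :=
  (forall x y, D x -> D y -> f (vadd x y) = f x + f y) /\ (forall a x, D x -> f (vsc a x) = a * f x).
Definition domon (D : V -> Prop) (f : V -> R) := forall x, D x -> f x <= p x.

Definition ext (D : V -> Prop) (v : V) (x : V) : Prop := exists d t, D d /\ x = vadd d (vsc t v).

Lemma ext_uniq D v d d' t t' : subsp D -> ~ D v -> D d -> D d' ->
  vadd d (vsc t v) = vadd d' (vsc t' v) -> d = d' /\ t = t'.
Proof.
  intros [H0 [Ha Hs]] Hv Hd Hd' E.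
  assert (E' : vadd (vadd d (vsc t v)) (vadd (vsc (-1) d) (vsc (-t') v)) =
               vadd (vadd d' (vsc t' v)) (vadd (vsc (-1) d) (vsc (-t') v))) by (rewrite E; reflexivity).
  rewrite vswap4 in E'. rewrite (vswap4 d') in E'. rewrite Hopp, Hzero, <- !Hdr in E'.
  replace (t' + - t') with 0 in E' by ring. rewrite sc0, add0r in E'.
  assert (Ht : t = t').
  { destruct (Req_dec t t') as [e|n]; [exact e|]. exfalso. apply Hv.
    assert (Hin : D (vsc (/ (t + - t')) (vsc (t + - t') v))).
    { apply Hs. rewrite E'. apply Ha; auto. }
    rewrite Hsassoc in Hin. replace (/ (t + - t') * (t + - t')) with 1 in Hin by (field; lra).
    rewrite Hone in Hin. exact Hin. }
  subst t'. split; auto. apply vcancel in E. exact E.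
Qed.

Definition fext (D : V -> Prop) (f : V -> R) (v : V) (c : R) (x : V) : R :=
  match excluded_middle_informative (exists q : V * R, D (fst q) /\ x = vadd (fst q) (vsc (snd q) v)) with
  | left H => let q := proj1_sig (constructive_indefinite_description _ H) in f (fst q) + snd q * c
  | right _ => 0
  end.

Lemma fext_eq D f v c d t : subsp D -> ~ D v -> D d -> fext D f v c (vadd d (vsc t v)) = f d + t * c.
Proof.
  intros HD Hv Hd. unfold fext. destruct excluded_middle_informative as [H|H].
  - destruct (constructive_indefinite_description _ H) as [[d' t'] [Hd' E]]. simpl in *.
    destruct (ext_uniq D v d d' t t' HD Hv Hd Hd' E) as [-> ->]. reflexivity.
  - exfalso. apply H. exists (d, t). simpl. auto.
Qed.

Lemma ext_good D f v c : subsp D -> linon D f -> domon D f -> ~ D v ->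
  (forall d, D d -> f d - p (vadd d (vsc (-1) v)) <= c) ->
  (forall d, D d -> c <= p (vadd d v) - f d) ->
  subsp (ext D v) /\ linon (ext D v) (fext D f v c) /\ domon (ext D v) (fext D f v c) /\
  (forall d, D d -> ext D v d) /\ (forall d, D d -> fext D f v c d = f d) /\
  ext D v v /\ fext D f v c v = c.
Proof.
  intros HD Hf Hdom Hv Lo Hi.
  pose proof HD as [H0 [Ha Hs]]. destruct Hf as [Hfa Hfs].
  assert (fz : f vz = 0).
  { rewrite <- (sc0 vz). rewrite Hfs by exact H0. ring. }
  assert (Hrep : forall d, d = vadd d (vsc 0 v)) by (intro; rewrite sc0, add0r; reflexivity).
  assert (Hvrep : v = vadd vz (vsc 1 v)) by (rewrite Hone, Hzero; reflexivity).
  split; [|split; [|split; [|split; [|split; [|split]]]]].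
  - split; [|split].
    + exists vz, 0. split; auto.
    + intros x y [d1 [t1 [Hd1 ->]]] [d2 [t2 [Hd2 ->]]]. exists (vadd d1 d2), (t1 + t2).
      split; auto. rewrite vswap4, Hdr. reflexivity.
    + intros a x [d1 [t1 [Hd1 ->]]]. exists (vsc a d1), (a * t1). split; auto.
      rewrite Hdl, Hsassoc. reflexivity.
  - split.
    + intros x y [d1 [t1 [Hd1 ->]]] [d2 [t2 [Hd2 ->]]].
      rewrite vswap4, <- Hdr, !fext_eq by auto. rewrite Hfa by auto. ring.
    + intros a x [d1 [t1 [Hd1 ->]]]. rewrite Hdl, Hsassoc, !fext_eq by auto.
      rewrite Hfs by auto. ring.
  - intros x [d [t [Hd ->]]]. rewrite fext_eq by auto.
    destruct (Rtotal_order t 0) as [Hlt|[Heq|Hgt]].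
    + set (s := - t).
      pose proof (Lo (vsc (/ s) d) (Hs _ _ Hd)) as L. rewrite Hfs in L by auto.
      assert (Hp : p (vadd d (vsc t v)) = s * p (vadd (vsc (/ s) d) (vsc (-1) v))).
      { replace s with (Rabs s) by (unfold s; rewrite Rabs_right; lra).
        rewrite <- Hphom, Hdl, !Hsassoc. rewrite Rabs_right by (unfold s; lra).
        replace (s * / s) with 1 by (unfold s; field; lra). rewrite Hone.
        unfold s. replace (- t * -1) with t by ring. reflexivity. }
      rewrite Hp.
      assert (Hm : s * (/ s * f d - p (vadd (vsc (/ s) d) (vsc (-1) v))) <= s * c)
        by (apply Rmult_le_compat_l; [unfold s; lra | exact L]).
      replace (s * (/ s * f d - p (vadd (vsc (/ s) d) (vsc (-1) v)))) with
        (f d - s * p (vadd (vsc (/ s) d) (vsc (-1) v))) in Hm by (unfold s; field; lra).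
      unfold s in *. lra.
    + subst t. rewrite sc0, add0r, Rmult_0_l, Rplus_0_r. apply Hdom; auto.
    + pose proof (Hi (vsc (/ t) d) (Hs _ _ Hd)) as L. rewrite Hfs in L by auto.
      assert (Hp : p (vadd d (vsc t v)) = t * p (vadd (vsc (/ t) d) v)).
      { replace t with (Rabs t) at 2 by (rewrite Rabs_right; lra).
        rewrite <- Hphom, Hdl, !Hsassoc.
        replace (t * / t) with 1 by (field; lra). rewrite Hone. reflexivity. }
      rewrite Hp.
      assert (Hm : t * c <= t * (p (vadd (vsc (/ t) d) v) - / t * f d))
        by (apply Rmult_le_compat_l; lra).
      replace (t * (p (vadd (vsc (/ t) d) v) - / t * f d)) with
        (t * p (vadd (vsc (/ t) d) v) - f d) in Hm by (field; lra).
      lra.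
  - intros d Hd. exists d, 0. split; auto.
  - intros d Hd. rewrite (Hrep d) at 1. rewrite fext_eq by auto. ring.
  - exists vz, 1. split; auto.
  - rewrite Hvrep at 2. rewrite fext_eq by auto. rewrite fz. ring.
Qed.

Lemma c_exists D f v : subsp D -> linon D f -> domon D f ->
  exists c, (forall d, D d -> f d - p (vadd d (vsc (-1) v)) <= c) /\
            (forall d, D d -> c <= p (vadd d v) - f d).
Proof.
  intros HD Hf Hdom. pose proof HD as [H0 [Ha Hs]]. destruct Hf as [Hfa Hfs].
  assert (key : forall d1 d2, D d1 -> D d2 ->
     f d1 - p (vadd d1 (vsc (-1) v)) <= p (vadd d2 v) - f d2).
  { intros d1 d2 H1 H2.
    assert (E : vadd d1 d2 = vadd (vadd d1 (vsc (-1) v)) (vadd d2 v)).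
    { rewrite vswap4, (Hcomm (vsc (-1) v) v), Hopp, add0r. reflexivity. }
    pose proof (Hdom _ (Ha _ _ H1 H2)) as Hd. rewrite Hfa in Hd by auto.
    rewrite E in Hd. pose proof (Hpsub (vadd d1 (vsc (-1) v)) (vadd d2 v)). lra. }
  set (E := fun r => exists d, D d /\ r = f d - p (vadd d (vsc (-1) v))).
  assert (Hb : bound E).
  { exists (p (vadd vz v) - f vz). intros r [d [Hd ->]]. apply key; auto. }
  assert (Hne : exists r, E r) by (exists (f vz - p (vadd vz (vsc (-1) v))); exists vz; auto).
  destruct (completeness E Hb Hne) as [c [Hub Hlub]].
  exists c. split.
  - intros d Hd. apply Hub. exists d. auto.
  - intros d Hd. apply Hlub. intros r [d' [Hd' ->]]. apply key; auto.
Qed.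

Section James.
Variables y z : V.
Hypothesis Hbj : forall l, p (vadd y (vsc l z)) >= p y.

Definition Good (q : (V -> Prop) * (V -> R)) : Prop :=
  subsp (fst q) /\ linon (fst q) (snd q) /\ domon (fst q) (snd q) /\
  fst q y /\ fst q z /\ snd q y = p y /\ snd q z = 0.

Lemma good_init : exists q, Good q.
Proof.
  set (D0 := fun x => exists b, x = vsc b z).
  set (f0 := fun _ : V => 0).
  assert (HD0 : subsp D0).
  { split; [|split].
    - exists 0. rewrite sc0. reflexivity.
    - intros x x' [b1 ->] [b2 ->]. exists (b1 + b2). rewrite Hdr. reflexivity.
    - intros a x [b ->]. exists (a * b). apply Hsassoc. }
  assert (Hf0 : linon D0 f0) by (unfold f0; split; intros; ring).
  assert (Hdom0 : domon D0 f0) by (intros x _; apply pnn).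
  assert (Hz0 : D0 z) by (exists 1; rewrite Hone; reflexivity).
  destruct (classic (D0 y)) as [Hy|Hy].
  - exists (D0, f0). unfold Good; simpl.
    refine (conj HD0 (conj Hf0 (conj Hdom0 (conj Hy (conj Hz0 (conj _ _)))))); [|reflexivity].
    destruct Hy as [b Eb]. pose proof (Hbj (- b)) as H.
    rewrite Eb in H at 1. rewrite <- Hdr in H. replace (b + - b) with 0 in H by ring.
    rewrite sc0, p0 in H. pose proof (pnn y). unfold f0. lra.
  - destruct (ext_good D0 f0 y (p y) HD0 Hf0 Hdom0 Hy) as [H1 [H2 [H3 [H4 [H5 [H6 H7]]]]]].
    + intros d _. unfold f0. pose proof (pnn y). pose proof (pnn (vadd d (vsc (-1) y))). lra.
    + intros d [b ->]. unfold f0. rewrite Hcomm. pose proof (Hbj b). lra.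
    + exists (ext D0 y, fext D0 f0 y (p y)). unfold Good; simpl.
      refine (conj H1 (conj H2 (conj H3 (conj H6 (conj (H4 _ Hz0) (conj H7 _)))))).
      rewrite H5 by auto. reflexivity.
Qed.

Definition GT := { q | Good q }.
Definition Rel (a b : GT) : Prop :=
  (forall x, fst (proj1_sig a) x -> fst (proj1_sig b) x) /\
  (forall x, fst (proj1_sig a) x -> snd (proj1_sig b) x = snd (proj1_sig a) x).

Lemma chain_ub (A : GT -> Prop) : (forall s t, A s -> A t -> Rel s t \/ Rel t s) ->
  (exists t, A t) -> exists t, forall s, A s -> Rel s t.
Proof.
  intros Htot [t1 Ht1].
  set (Du := fun x => exists t, A t /\ fst (proj1_sig t) x).
  set (fu := fun x => match excluded_middle_informative (exists t, A t /\ fst (proj1_sig t) x) with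
     | left H => snd (proj1_sig (proj1_sig (constructive_indefinite_description _ H))) x
     | right _ => 0 end).
  assert (Hfu : forall t x, A t -> fst (proj1_sig t) x -> fu x = snd (proj1_sig t) x).
  { intros t x Ht Hx. unfold fu. destruct excluded_middle_informative as [H|H].
    - destruct (constructive_indefinite_description _ H) as [t' [Ht' Hx']]. simpl.
      destruct (Htot t t' Ht Ht') as [[_ R2]|[_ R2]]; auto. symmetry. auto.
    - exfalso. apply H. eauto. }
  assert (Hbig : forall t t' x x', A t -> A t' -> fst (proj1_sig t) x -> fst (proj1_sig t') x' ->
     exists u, A u /\ fst (proj1_sig u) x /\ fst (proj1_sig u) x').
  { intros t t' x x' Ht Ht' Hx Hx'. destruct (Htot t t' Ht Ht') as [[R1 _]|[R1 _]].
    - exists t'. auto.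
    - exists t. auto. }
  assert (Gu : Good (Du, fu)).
  { destruct t1 as [[D1 f1] G1]. pose proof G1 as [[H10 _] [_ [_ [Hy1 [Hz1 [Hfy1 Hfz1]]]]]].
    unfold Good; simpl. split; [|split; [|split; [|split; [|split; [|split]]]]].
    - split; [|split].
      + exists (exist _ (D1, f1) G1). simpl. auto.
      + intros x x' [t [Ht Hx]] [t' [Ht' Hx']].
        destruct (Hbig t t' x x' Ht Ht' Hx Hx') as [u [Hu [Ux Ux']]].
        exists u. split; auto. pose proof (proj2_sig u) as [[_ [Ha _]] _]. simpl in *. auto.
      + intros a x [t [Ht Hx]]. exists t. split; auto.
        pose proof (proj2_sig t) as [[_ [_ Hs]] _]. simpl in *. auto.
    - split.
      + intros x x' [t [Ht Hx]] [t' [Ht' Hx']].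
        destruct (Hbig t t' x x' Ht Ht' Hx Hx') as [u [Hu [Ux Ux']]].
        assert (Uxx : fst (proj1_sig u) (vadd x x')).
        { pose proof (proj2_sig u) as [[_ [Ha _]] _]. simpl in *. auto. }
        rewrite (Hfu u _ Hu Uxx), (Hfu u _ Hu Ux), (Hfu u _ Hu Ux').
        pose proof (proj2_sig u) as [_ [[Hla _] _]]. simpl in *. auto.
      + intros a x [t [Ht Hx]].
        assert (Ua : fst (proj1_sig t) (vsc a x)).
        { pose proof (proj2_sig t) as [[_ [_ Hs]] _]. simpl in *. auto. }
        rewrite (Hfu t _ Ht Ua), (Hfu t _ Ht Hx).
        pose proof (proj2_sig t) as [_ [[_ Hls] _]]. simpl in *. auto.
    - intros x [t [Ht Hx]]. rewrite (Hfu t _ Ht Hx).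
      pose proof (proj2_sig t) as [_ [_ [Hd _]]]. simpl in *. auto.
    - exists (exist _ (D1, f1) G1). simpl. auto.
    - exists (exist _ (D1, f1) G1). simpl. auto.
    - rewrite (Hfu (exist _ (D1, f1) G1)) by (simpl; auto). simpl. auto.
    - rewrite (Hfu (exist _ (D1, f1) G1)) by (simpl; auto). simpl. auto. }
  exists (exist _ (Du, fu) Gu). intros s Hs. split; simpl.
  - intros x Hx. exists s. auto.
  - intros x Hx. apply Hfu; auto.
Qed.

Theorem HB_james : exists f : V -> R,
  (forall u v, f (vadd u v) = f u + f v) /\ (forall a u, f (vsc a u) = a * f u) /\
  (forall u, Rabs (f u) <= p u) /\ f y = p y /\ f z = 0.
Proof.
  destruct good_init as [q0 G0].
  destruct (zornP GT (exist _ q0 G0) Rel) as [t Hmax].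
  - intro t. split; auto.
  - intros r s t [A1 B1] [A2 B2]. split; auto. intros x Hx. rewrite B2 by auto. auto.
  - intros A HA. destruct (classic (exists t, A t)) as [Hne|He].
    + apply chain_ub; auto.
    + exists (exist _ q0 G0). intros s Hs. exfalso. apply He. eauto.
  - destruct t as [[D f] G]. pose proof G as [HD [[Hfa Hfs] [Hdom [Hy [Hz [Hfy Hfz]]]]]].
    simpl in *.
    assert (All : forall v, D v).
    { intro v. destruct (classic (D v)) as [Hv|Hv]; auto. exfalso.
      destruct (c_exists D f v HD (conj Hfa Hfs) Hdom) as [c [Lo Hi]].
      destruct (ext_good D f v c HD (conj Hfa Hfs) Hdom Hv Lo Hi) as [H1 [H2 [H3 [H4 [H5 [H6 H7]]]]]].
      assert (G' : Good (ext D v, fext D f v c)).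
      { unfold Good; simpl.
        refine (conj H1 (conj H2 (conj H3 (conj (H4 _ Hy) (conj (H4 _ Hz) (conj _ _)))))).
        - rewrite H5 by auto. auto.
        - rewrite H5 by auto. auto. }
      destruct (Hmax (exist _ _ G')) as [R1 _].
      + split; simpl; auto.
      + simpl in R1. apply Hv. apply R1. auto. }
    exists f. split; [|split; [|split; [|split]]]; auto.
    intro u. apply Rabs_le. split.
    + pose proof (Hdom (vsc (-1) u) (All _)). rewrite Hfs, Hphom in H by auto.
      replace (Rabs (-1)) with 1 in H by (rewrite Rabs_left; lra). lra.
    + apply Hdom; auto.
Qed.
End James.
End HBgen.

Section NS.
Variable Z : NormedSpace.
Lemma nsc0 (x : Z) : nscal 0 x = nzero.
Proof. exact (sc0 _ _ _ _ (add_assoc Z) (add_comm Z) (add_zero Z) (add_opp Z) (scal_distr_r Z) x). Qed.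
Lemma nscz a : nscal a (@nzero Z) = nzero.
Proof. exact (scz _ _ _ _ (add_assoc Z) (add_comm Z) (add_zero Z) (add_opp Z) (scal_assoc Z) (scal_distr_r Z) a). Qed.
Lemma nadd0 (x : Z) : nadd x nzero = x.
Proof. exact (add0r _ _ _ (add_comm Z) (add_zero Z) x). Qed.
Lemma nnn (x : Z) : 0 <= nnorm x.
Proof. exact (pnn _ _ _ _ _ (add_assoc Z) (add_comm Z) (add_zero Z) (add_opp Z) (scal_distr_r Z) (norm_triangle Z) (norm_scal Z) x). Qed.
Lemma nn0 : nnorm (@nzero Z) = 0.
Proof. exact (p0 _ _ _ _ _ (add_assoc Z) (add_comm Z) (add_zero Z) (add_opp Z) (scal_distr_r Z) (norm_scal Z)). Qed.
Lemma ncancel (x y z : Z) : nadd x z = nadd y z -> x = y.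
Proof. exact (vcancel _ _ _ _ (add_assoc Z) (add_comm Z) (add_zero Z) (add_opp Z) x y z). Qed.
Lemma james_ns (y z : Z) : BJ Z y z -> exists f : Z -> R,
  (forall u v, f (nadd u v) = f u + f v) /\ (forall a u, f (nscal a u) = a * f u) /\
  (forall u, Rabs (f u) <= nnorm u) /\ f y = nnorm y /\ f z = 0.
Proof.
  intro H. exact (HB_james _ _ _ _ _ (add_assoc Z) (add_comm Z) (add_zero Z) (add_opp Z) (scal_one Z)
   (scal_assoc Z) (scal_distr_l Z) (scal_distr_r Z) (norm_triangle Z) (norm_scal Z) y z H).
Qed.
Lemma BJ0 (y : Z) : BJ Z y nzero.
Proof. intro l. rewrite nscz, nadd0. lra. Qed.
End NS.

Lemma Rsup_ub (E : R -> Prop) x : bound E -> E x -> x <= Rsup E.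
Proof.
  intros Hb Hx. unfold Rsup. destruct excluded_middle_informative as [H|H].
  - destruct (completeness E (proj1 H) (proj2 H)) as [s [H1 H2]]. simpl. apply H1. exact Hx.
  - exfalso. apply H. split; eauto.
Qed.

Lemma Rsup_lub (E : R -> Prop) M : (exists x, E x) -> (forall x, E x -> x <= M) -> Rsup E <= M.
Proof.
  intros Hne Hb. unfold Rsup. destruct excluded_middle_informative as [H|H].
  - destruct (completeness E (proj1 H) (proj2 H)) as [s [H1 H2]]. simpl. apply H2. exact Hb.
  - exfalso. apply H. split; [exists M; exact Hb| exact Hne].
Qed.

Section Dual.
Variable Z : NStruct.
Hypothesis Zhom : forall a (u : Z), nnorm (nscal a u) = Rabs a * nnorm u.
Hypothesis Znn : forall u : Z, 0 <= nnorm u.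

Lemma dual_le1 (f : Z -> R) : is_functional Z f -> dualnorm Z f = 1 -> forall u, Rabs (f u) <= nnorm u.
Proof.
  intros [Fa [Fs [C HC]]] Hd u.
  set (E := fun r => exists z : Z, nnorm z <= 1 /\ r = Rabs (f z)).
  assert (Hb : bound E).
  { exists (Rmax C 0). intros r [z [Hz ->]]. eapply Rle_trans; [apply HC|].
    pose proof (Znn z). destruct (Rle_dec 0 C).
    - rewrite Rmax_left by lra. nra.
    - rewrite Rmax_right by lra. nra. }
  assert (Hle : forall z, nnorm z <= 1 -> Rabs (f z) <= 1).
  { intros z Hz. unfold dualnorm in Hd. rewrite <- Hd. apply Rsup_ub; auto. exists z; auto. }
  destruct (Req_dec (nnorm u) 0) as [H0|H0].
  - rewrite H0. destruct (Req_dec (f u) 0) as [e|n]; [rewrite e, Rabs_R0; lra|].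
    exfalso. assert (Hz : nnorm (nscal (2 / Rabs (f u)) u) <= 1) by (rewrite Zhom, H0; lra).
    apply Hle in Hz. rewrite Fs, Rabs_mult in Hz.
    pose proof (Rabs_pos_lt _ n).
    rewrite (Rabs_right (2 / Rabs (f u))) in Hz by (apply Rle_ge; unfold Rdiv; apply Rmult_le_pos; [lra|left; apply Rinv_0_lt_compat; lra]).
    replace (2 / Rabs (f u) * Rabs (f u)) with 2 in Hz by (field; lra). lra.
  - pose proof (Znn u). assert (Hp : 0 < nnorm u) by lra.
    assert (Hz : nnorm (nscal (/ nnorm u) u) <= 1).
    { rewrite Zhom, Rabs_right by (left; apply Rinv_0_lt_compat; lra). right. field. lra. }
    apply Hle in Hz. rewrite Fs, Rabs_mult, Rabs_right in Hz by (left; apply Rinv_0_lt_compat; lra).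
    apply (Rmult_le_compat_l (nnorm u)) in Hz; [|lra].
    replace (nnorm u * (/ nnorm u * Rabs (f u))) with (Rabs (f u)) in Hz by (field; lra). lra.
Qed.

Lemma dual_eq1 (f : Z -> R) : (forall u, Rabs (f u) <= nnorm u) ->
  (exists z, nnorm z <= 1 /\ Rabs (f z) = 1) -> dualnorm Z f = 1.
Proof.
  intros Hf [z [Hz Hfz]]. unfold dualnorm. apply Rle_antisym.
  - apply Rsup_lub. { exists (Rabs (f z)). exists z. auto. }
    intros r [w [Hw ->]]. specialize (Hf w). lra.
  - apply (Rle_trans _ (Rabs (f z))); [lra|]. apply Rsup_ub.
    + exists 1. intros r [w [Hw ->]]. specialize (Hf w). lra.
    + exists z. auto.
Qed.
End Dual.

Section BLs.
Variables X Y : NormedSpace.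

Lemma BL_ext (A B : BL X Y) : (forall x, A x = B x) -> A = B.
Proof.
  destruct A as [a Aa As Ab], B as [b Ba Bs Bb]. simpl. intro H.
  assert (a = b) by (extensionality x; auto). subst b. f_equal; apply proof_irrelevance.
Qed.

Lemma app_zero (A : BL X Y) : A nzero = nzero.
Proof. rewrite <- (nsc0 X nzero), app_scal, nsc0. reflexivity. Qed.

Lemma opset_ne (A : BL X Y) : exists r, exists x : X, nnorm x <= 1 /\ r = nnorm (A x).
Proof. exists (nnorm (A nzero)), nzero. rewrite nn0. split; [lra|reflexivity]. Qed.

Lemma opset_bound (A : BL X Y) : bound (fun r => exists x : X, nnorm x <= 1 /\ r = nnorm (A x)).
Proof.
  destruct (app_bounded _ _ A) as [C HC]. exists (Rmax C 0).
  intros r [x [Hx ->]]. eapply Rle_trans; [apply HC|]. pose proof (nnn X x).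
  destruct (Rle_dec 0 C).
  - rewrite Rmax_left by lra. nra.
  - rewrite Rmax_right by lra. nra.
Qed.

Lemma opnorm_nn (A : BL X Y) : 0 <= opnorm A.
Proof.
  unfold opnorm. apply (Rle_trans _ (nnorm (A nzero))).
  - rewrite app_zero, nn0. lra.
  - apply Rsup_ub; [apply opset_bound|]. exists nzero. rewrite nn0. split; [lra|reflexivity].
Qed.

Lemma opnorm_ub (A : BL X Y) x : nnorm x <= 1 -> nnorm (A x) <= opnorm A.
Proof. intro H. unfold opnorm. apply Rsup_ub; [apply opset_bound|]. exists x. auto. Qed.

Lemma opnorm_ge (A : BL X Y) x : nnorm (A x) <= opnorm A * nnorm x.
Proof.
  destruct (Req_dec (nnorm x) 0) as [H0|H0].
  - apply norm_eq0 in H0. subst x. rewrite app_zero, !nn0. lra.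
  - pose proof (nnn X x). assert (Hp : 0 < nnorm x) by lra.
    assert (Hz : nnorm (nscal (/ nnorm x) x) <= 1).
    { rewrite norm_scal, Rabs_right by (left; apply Rinv_0_lt_compat; lra). right. field. lra. }
    apply opnorm_ub with (A := A) in Hz. rewrite app_scal, norm_scal, Rabs_right in Hz by (left; apply Rinv_0_lt_compat; lra).
    apply (Rmult_le_compat_l (nnorm x)) in Hz; [|lra].
    replace (nnorm x * (/ nnorm x * nnorm (A x))) with (nnorm (A x)) in Hz by (field; lra). lra.
Qed.

Lemma opnorm_le (A : BL X Y) M : (forall x, nnorm x <= 1 -> nnorm (A x) <= M) -> opnorm A <= M.
Proof.
  intro H. unfold opnorm. apply Rsup_lub; [apply opset_ne|]. intros r [x [Hx ->]]. auto.
Qed.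

Lemma opnorm_tri (A B : BL X Y) : opnorm (opadd X Y A B) <= opnorm A + opnorm B.
Proof.
  apply opnorm_le. intros x Hx. simpl. eapply Rle_trans; [apply norm_triangle|].
  pose proof (opnorm_ub A x Hx). pose proof (opnorm_ub B x Hx). lra.
Qed.

Lemma opnorm_scal_le c (A : BL X Y) : opnorm (opscal X Y c A) <= Rabs c * opnorm A.
Proof.
  apply opnorm_le. intros x Hx. simpl. rewrite norm_scal.
  apply Rmult_le_compat_l; [apply Rabs_pos|]. apply opnorm_ub; auto.
Qed.

Lemma opnorm_scal c (A : BL X Y) : opnorm (opscal X Y c A) = Rabs c * opnorm A.
Proof.
  apply Rle_antisym; [apply opnorm_scal_le|].
  destruct (Req_dec c 0) as [->|Hc].
  - rewrite Rabs_R0, Rmult_0_l. apply opnorm_nn.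
  - assert (E : A = opscal X Y (/ c) (opscal X Y c A)).
    { apply BL_ext. intro x. simpl. rewrite scal_assoc. replace (/ c * c) with 1 by (field; auto).
      rewrite scal_one. reflexivity. }
    pose proof (opnorm_scal_le (/ c) (opscal X Y c A)) as H. rewrite <- E in H.
    rewrite Rabs_inv in H. pose proof (Rabs_pos_lt _ Hc).
    apply (Rmult_le_compat_l (Rabs c)) in H; [|lra].
    replace (Rabs c * (/ Rabs c * opnorm (opscal X Y c A))) with (opnorm (opscal X Y c A)) in H by (field; lra).
    lra.
Qed.

Lemma james_B (T A : BL X Y) : BJ (Bspace X Y) T A -> exists F : BL X Y -> R,
  (forall u v, F (opadd X Y u v) = F u + F v) /\ (forall a u, F (opscal X Y a u) = a * F u) /\
  (forall u, Rabs (F u) <= opnorm u) /\ F T = opnorm T /\ F A = 0.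
Proof.
  intro H.
  refine (HB_james (BL X Y) (opzero X Y) (opadd X Y) (opscal X Y) opnorm _ _ _ _ _ _ _ _ _ _ T A H).
  - intros. apply BL_ext. intro. simpl. apply add_assoc.
  - intros. apply BL_ext. intro. simpl. apply add_comm.
  - intros. apply BL_ext. intro. simpl. apply add_zero.
  - intros. apply BL_ext. intro. simpl. apply add_opp.
  - intros. apply BL_ext. intro. simpl. apply scal_one.
  - intros. apply BL_ext. intro. simpl. apply scal_assoc.
  - intros. apply BL_ext. intro. simpl. apply scal_distr_l.
  - intros. apply BL_ext. intro. simpl. apply scal_distr_r.
  - apply opnorm_tri.
  - apply opnorm_scal.
Qed.
End BLs.

Lemma nf_good (Z : NormedSpace) (g : Z -> R) (y : Z) :
  (forall u v, g (nadd u v) = g u + g v) -> (forall a u, g (nscal a u) = a * g u) ->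
  (forall u, Rabs (g u) <= nnorm u) -> g y = nnorm y -> 0 < nnorm y ->
  is_functional Z g /\ dualnorm Z g = 1.
Proof.
  intros Ha Hs Hb Hy Hp. split.
  - split; [exact Ha|split; [exact Hs|]]. exists 1. intro u. rewrite Rmult_1_l. apply Hb.
  - apply dual_eq1; auto. exists (nscal (/ nnorm y) y).
    rewrite norm_scal, Hs, Hy, Rabs_right by (left; apply Rinv_0_lt_compat; lra).
    replace (/ nnorm y * nnorm y) with 1 by (field; lra). rewrite Rabs_R1. split; lra.
Qed.

Lemma nf_bound (Z : NormedSpace) (g : Z -> R) : is_functional Z g -> dualnorm Z g = 1 ->
  forall u, Rabs (g u) <= nnorm u.
Proof. apply dual_le1; [apply norm_scal|apply nnn]. Qed.

Section Main.
Variables X Y : NormedSpace.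

Definition rk (h : X -> R) (Ha : forall u v, h (nadd u v) = h u + h v)
  (Hs : forall a u, h (nscal a u) = a * h u) (Hb : forall u, Rabs (h u) <= nnorm u) (w : Y) : BL X Y.
Proof.
  refine {| app := fun u => nscal (h u) w |}.
  - intros. rewrite Ha. apply scal_distr_r.
  - intros. rewrite Hs. symmetry; apply scal_assoc.
  - exists (nnorm w). intro u. rewrite norm_scal. pose proof (Hb u). pose proof (nnn Y w).
    pose proof (Rabs_pos (h u)). nra.
Defined.

Lemma opnorm_pos (T : BL X Y) : T <> opzero X Y -> 0 < opnorm T.
Proof.
  intro hT. pose proof (opnorm_nn X Y T). destruct (Req_dec (opnorm T) 0) as [E|E]; [|lra].
  exfalso. apply hT. apply BL_ext. intro x. simpl. apply norm_eq0.
  pose proof (opnorm_ge X Y T x). pose proof (nnn Y (T x)). rewrite E in H0. lra.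
Qed.

Lemma Bdual_le1 (F : BL X Y -> R) : is_functional (Bspace X Y) F -> dualnorm (Bspace X Y) F = 1 ->
  forall u, Rabs (F u) <= opnorm u.
Proof.
  intros H1 H2 u. exact (dual_le1 (Bspace X Y) (opnorm_scal X Y) (opnorm_nn X Y) F H1 H2 u).
Qed.

Lemma Bnf_good (T : BL X Y) (F : BL X Y -> R) :
  (forall u v, F (opadd X Y u v) = F u + F v) -> (forall a u, F (opscal X Y a u) = a * F u) ->
  (forall u, Rabs (F u) <= opnorm u) -> F T = opnorm T -> 0 < opnorm T ->
  is_functional (Bspace X Y) F /\ dualnorm (Bspace X Y) F = 1.
Proof.
  intros Ha Hs Hb Hy Hp. split.
  - split; [exact Ha|split; [exact Hs|]]. exists 1. intro u. rewrite Rmult_1_l. apply Hb.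
  - apply (dual_eq1 (Bspace X Y)); auto. exists (opscal X Y (/ opnorm T) T).
    change (opnorm (opscal X Y (/ opnorm T) T) <= 1 /\ Rabs (F (opscal X Y (/ opnorm T) T)) = 1).
    rewrite opnorm_scal, Hs, Hy, Rabs_right by (left; apply Rinv_0_lt_compat; lra).
    replace (/ opnorm T * opnorm T) with 1 by (field; lra). rewrite Rabs_R1. split; lra.
Qed.

Lemma Fsupp (T : BL X Y) (x : X) (g : Y -> R) : nnorm x = 1 -> nnorm (T x) = opnorm T ->
  (forall u v, g (nadd u v) = g u + g v) -> (forall a u, g (nscal a u) = a * g u) ->
  (forall u, Rabs (g u) <= nnorm u) -> g (T x) = nnorm (T x) -> 0 < opnorm T ->
  is_functional (Bspace X Y) (fun B : BL X Y => g (B x)) /\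
  dualnorm (Bspace X Y) (fun B : BL X Y => g (B x)) = 1 /\ g (T x) = opnorm T.
Proof.
  intros Hx HTx Ha Hs Hb Hg Hp.
  destruct (Bnf_good T (fun B : BL X Y => g (B x))) as [H1 H2]; auto.
  - intros. simpl. apply Ha.
  - intros. simpl. apply Hs.
  - intro u. eapply Rle_trans; [apply Hb|]. pose proof (opnorm_ge X Y u x). rewrite Hx in H. lra.
  - simpl. congruence.
  - split; auto. split; auto. congruence.
Qed.
End Main.

Theorem theorem3p3 (X Y : NormedSpace) (T : BL X Y)
  (hT : T <> opzero X Y) (hM : exists x, M_T T x) :
  smooth (Bspace X Y) T <->
  exists x0 : X,
    in_sphere X x0 /\
    (forall x, M_T T x <-> (x = x0 \/ x = nscal (-1) x0)) /\
    smooth Y (T x0) /\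
    (forall A : BL X Y, BJ (Bspace X Y) T A <-> BJ Y (T x0) (A x0)).
Proof.
  pose proof (opnorm_pos X Y T hT) as Hpos.
  split.
  - intros [_ [F0 [[HF0f [HF0d HF0T]] Huniq]]].
    destruct hM as [x0 [Hx0 HTx0]]. unfold in_sphere in Hx0.
    assert (KU : forall x (g : Y -> R), nnorm x = 1 -> nnorm (T x) = opnorm T ->
      (forall u v, g (nadd u v) = g u + g v) -> (forall a u, g (nscal a u) = a * g u) ->
      (forall u, Rabs (g u) <= nnorm u) -> g (T x) = nnorm (T x) ->
      (fun B : BL X Y => g (B x)) = F0).
    { intros x g Hx HTx Ha Hs Hb Hg. symmetry. apply Huniq.
      exact (Fsupp X Y T x g Hx HTx Ha Hs Hb Hg Hpos). }
    destruct (james_ns Y (T x0) nzero (BJ0 Y _)) as [g0 [g0a [g0s [g0b [g0T _]]]]].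
    pose proof (KU x0 g0 Hx0 HTx0 g0a g0s g0b g0T) as K0.
    exists x0. split; [exact Hx0|]. split; [|split].
    + intro x. split.
      * intros [Hx HTx]. unfold in_sphere in Hx.
        destruct (james_ns Y (T x) nzero (BJ0 Y _)) as [gx [gxa [gxs [gxb [gxT _]]]]].
        pose proof (KU x gx Hx HTx gxa gxs gxb gxT) as Kx.
        rewrite <- K0 in Kx.
        set (k := gx (T x0) / opnorm T).
        assert (Hk : forall (h : X -> R) (Ha : forall u v, h (nadd u v) = h u + h v)
          (Hs : forall a u, h (nscal a u) = a * h u) (Hb : forall u, Rabs (h u) <= nnorm u), h x0 = k * h x).
        { intros h Ha Hs Hb. pose proof (equal_f Kx (rk X Y h Ha Hs Hb (T x0))) as E. simpl in E.
          rewrite gxs, g0s, g0T, HTx0 in E. unfold k. apply (Rmult_eq_reg_r (opnorm T)); [|lra]. rewrite <- E. field. lra. }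
        set (zz := nadd x0 (nscal (- k) x)).
        destruct (james_ns X zz nzero (BJ0 X _)) as [h [ha [hs [hb [hz _]]]]].
        assert (Ez : zz = nzero).
        { apply norm_eq0. rewrite <- hz. unfold zz. rewrite ha, hs, (Hk h ha hs hb). ring. }
        assert (Ex0 : x0 = nscal k x).
        { assert (E2 : nadd zz (nscal k x) = nadd nzero (nscal k x)) by (rewrite Ez; reflexivity).
          unfold zz in E2. rewrite <- add_assoc, <- scal_distr_r, add_zero in E2.
          replace (- k + k) with 0 in E2 by ring. rewrite nsc0, nadd0 in E2. exact E2. }
        assert (Hak : Rabs k = 1).
        { rewrite Ex0, norm_scal, Hx in Hx0. lra. }
        assert (Exk : x = nscal k x0).
        { rewrite Ex0, scal_assoc. replace (k * k) with (Rabs k * Rabs k) by (rewrite <- Rabs_mult; apply Rabs_right; nra).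
          rewrite Hak, Rmult_1_l, scal_one. reflexivity. }
        destruct (Rcase_abs k).
        -- right. rewrite Exk. f_equal. rewrite Rabs_left in Hak; lra.
        -- left. rewrite Exk. rewrite Rabs_right in Hak by lra. rewrite Hak. apply scal_one.
      * intros [-> | ->].
        -- split; auto.
        -- split.
           ++ unfold in_sphere. rewrite norm_scal, Hx0. rewrite Rabs_left; lra.
           ++ rewrite app_scal, norm_scal, HTx0. rewrite Rabs_left; lra.
    + assert (HTx0p : 0 < nnorm (T x0)) by lra.
      split.
      { intro E. rewrite E, nn0 in HTx0p. lra. }
      exists g0. split.
      * destruct (nf_good Y g0 (T x0) g0a g0s g0b g0T HTx0p). auto.
      * intros g' [Hg'f [Hg'd Hg'T]].
        pose proof (nf_bound Y g' Hg'f Hg'd) as Hg'b. destruct Hg'f as [g'a [g's _]].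
        pose proof (KU x0 g' Hx0 HTx0 g'a g's Hg'b Hg'T) as K'.
        rewrite <- K0 in K'.
        destruct (james_ns X x0 nzero (BJ0 X _)) as [h [ha [hs [hb [hx _]]]]].
        extensionality w. pose proof (equal_f K' (rk X Y h ha hs hb w)) as E. simpl in E.
        rewrite hx, Hx0, !scal_one in E. symmetry. exact E.
    + intro A. split.
      * intro HBJ. destruct (james_B X Y T A HBJ) as [F [Fa [Fs [Fb [FT FA]]]]].
        destruct (Bnf_good X Y T F Fa Fs Fb FT Hpos) as [G1 G2].
        assert (EF : F = F0) by (symmetry; apply Huniq; auto).
        rewrite <- K0 in EF. pose proof (equal_f EF A) as EA. simpl in EA. rewrite FA in EA.
        intro l. pose proof (g0b (nadd (T x0) (nscal l (A x0)))) as Hb.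
        rewrite g0a, g0s, g0T, <- EA, Rmult_0_r, Rplus_0_r in Hb.
        rewrite Rabs_right in Hb by (apply Rle_ge, nnn). lra.
      * intros HBJ l. change (opnorm (opadd X Y T (opscal X Y l A)) >= opnorm T).
        pose proof (opnorm_ge X Y (opadd X Y T (opscal X Y l A)) x0) as H. simpl in H.
        rewrite Hx0, Rmult_1_r in H. pose proof (HBJ l). lra.
  - intros [x0 [Hx0 [HM [[HTne [g [[Hgf [Hgd HgT]] Hgu]]] Hiii]]]].
    unfold in_sphere in Hx0.
    destruct (proj2 (HM x0) (or_introl eq_refl)) as [_ HTx0].
    pose proof (nf_bound Y g Hgf Hgd) as Hgb. destruct Hgf as [ga [gs _]].
    split; [exact hT|].
    exists (fun B : BL X Y => g (B x0)). split.
    + exact (Fsupp X Y T x0 g Hx0 HTx0 ga gs Hgb HgT Hpos).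
    + intros F' [HF'f [HF'd HF'T]].
      pose proof (Bdual_le1 X Y F' HF'f HF'd) as HF'b.
      destruct HF'f as [F'a [F's _]].
      change (F' T = opnorm T) in HF'T.
      assert (Ker : forall B : BL X Y, F' B = 0 -> g (B x0) = 0).
      { intros B HB.
        assert (BJB : BJ (Bspace X Y) T B).
        { intro l. change (opnorm (opadd X Y T (opscal X Y l B)) >= opnorm T).
          pose proof (HF'b (opadd X Y T (opscal X Y l B))) as H.
          assert (E : F' (opadd X Y T (opscal X Y l B)) = F' T + l * F' B).
          { rewrite <- F's. apply F'a. }
          rewrite E, HB, HF'T, Rmult_0_r, Rplus_0_r, Rabs_right in H by lra. lra. }
        apply Hiii in BJB.
        destruct (james_ns Y (T x0) (B x0) BJB) as [h [ha [hs [hb [hT0 hB]]]]].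
        assert (HTx0p : 0 < nnorm (T x0)) by lra.
        destruct (nf_good Y h (T x0) ha hs hb hT0 HTx0p) as [N1 N2].
        assert (Eh : g = h) by (apply Hgu; auto).
        rewrite Eh. exact hB. }
      extensionality B.
      set (k := F' B / opnorm T).
      assert (E1 : F' (opadd X Y B (opscal X Y (- k) T)) = 0).
      { assert (E : F' (opadd X Y B (opscal X Y (- k) T)) = F' B + F' (opscal X Y (- k) T)) by apply F'a.
        rewrite E. assert (E' : F' (opscal X Y (- k) T) = - k * F' T) by apply F's.
        rewrite E', HF'T. unfold k. field. lra. }
      apply Ker in E1. simpl in E1. rewrite ga, gs, HgT, HTx0 in E1.
      unfold k in E1. field_simplify in E1; [|lra].
      apply (Rmult_eq_compat_r (opnorm T)) in E1.
      replace ((g (B x0) * opnorm T - F' B * opnorm T) / opnorm T * opnorm T) with (g (B x0) * opnorm T - F' B * opnorm T) in E1 by (field; lra).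
      nra.
Qed.
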